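(* Let $0<q<1$ and let $f,h$ satisfy $0<h\le f^q$. Then there exists a non-increasing continuous function $g:(0,1]\to\mathbb{R}^+$ such that $\int_0^1 g(u)\,du=f$, $\int_0^1 g^q(u)\,du=h$, and $$\frac1t\int_0^t g(u)\,du=\omega_q\Big(\frac{f^q}{h}\Big)^{1/q}g(t)\quad\text{for all }t\in(0,1].$$
   Context: Here $\omega_q(z)=[H_q^{-1}(z)]^q$ for $z\ge1$, where $H_q(z)=(1-q)z^q+qz^{q-1}$ on $[1,\infty)$ (a strictly increasing bijection onto $[1,\infty)$). *)

(* Defs.v *)
From HB Require Import structures.
From mathcomp Require Import all_boot all_order all_algebra.
From mathcomp Require Import all_classical all_reals all_analysis.
Set Implicit Arguments. Unset Strict Implicit. Unset Printing Implicit Defensive.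
Import Order.TTheory GRing.Theory Num.Theory.
Local Open Scope ring_scope.
Local Open Scope classical_set_scope.

Definition Hq {R : realType} (q z : R) : R :=
  (1 - q) * z `^ q + q * z `^ (q - 1).

(* H_q^{-1}(z): the (unique, for 0<q<1 and z>=1) w >= 1 with H_q(w) = z *)
Definition Hq_inv {R : realType} (q z : R) : R :=
  xget 1 [set w | 1 <= w /\ Hq q w = z].

Definition omega_q {R : realType} (q z : R) : R := Hq_inv q z `^ q.

(* Main.v *)
Require Import Defs.
From HB Require Import structures.
From mathcomp Require Import all_boot all_order all_algebra.
From mathcomp Require Import all_classical all_reals all_analysis.
From mathcomp Require Import measurable_realfun ring.
Import Order.TTheory GRing.Theory Num.Theory numFieldNormedType.Exports.
Local Open Scope ring_scope.
Local Open Scope classical_set_scope.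

Section Helpers.
Variable R : realType.
Lemma powR_cont (r a : R) : 0 < a -> {for a, continuous (fun y => y `^ r)}.
Proof.
move=> a0; apply: differentiable_continuous; apply/derivable1_diffP.
by apply: derivable_powR; rewrite in_itv/= andbT.
Qed.

Lemma Fderiv (b x : R) : 0 < b -> 0 < x ->
  is_derive x 1 (fun y => b^-1 * y `^ b) (x `^ (b - 1)).
Proof.
move=> b0 x0.
have := is_derive1_powR b x0.
move=> H.
have -> : x `^ (b - 1) = b^-1 * (b * x `^ (b - 1)).
  by rewrite mulrA mulVf ?gt_eqF// mul1r.
exact: is_deriveZ.
Qed.

Lemma mpow (A : set R) (b : R) : measurable_fun A (fun u : R => (u `^ b)%:E).
Proof. by apply/measurable_EFinP; apply: measurable_funTS; exact: measurable_powR. Qed.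

Lemma int_pow (b t : R) : (0 < b)%R -> (0 < t)%R ->
  (\int[lebesgue_measure]_(u in `]0%R, t]%classic) (u `^ (b - 1))%:E = (t `^ b / b)%:E)%E.
Proof.
move=> b0 t0.
pose Fs := fun n : nat => `[(n.+1%:R^-1)%R, t]%classic : set R.
have U : `]0%R, t]%classic = \bigcup_n Fs n.
  rewrite (itv_open_bnd_bigcup false).
  by apply: eq_bigcupr => n _; rewrite /Fs add0r.
have nd : nondecreasing_seq Fs.
  move=> m n mn; rewrite subsetEset => x; rewrite /Fs /= !in_itv/= => /andP[h1 ->]; rewrite andbT.
  by apply: le_trans h1; rewrite lef_pV2 ?posrE// ler_nat ltnS.
have mF : forall i, measurable (Fs i) by move=> i; exact: measurable_itv.
rewrite U; apply: (cvg_unique _ (ge0_nondecreasing_set_cvg_integral _ _ _ _)) => //=.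
- move=> i; apply: measurableT_comp => //; apply: measurable_funTS; exact: measurable_powR.
- by move=> i x _; rewrite lee_fin powR_ge0.
have E : \forall n \near \oo,
    ((t `^ b - (n.+1%:R^-1) `^ b) / b)%:E =
    (\int[lebesgue_measure]_(x in Fs n) (x `^ (b - 1))%:E)%E.
  have ev := cvgr_lt 0 (@cvg_harmonic R) t t0.
  near=> n.
  have cn : (0 < n.+1%:R^-1 :> R)%R by [].
  have ct : (n.+1%:R^-1 < t :> R)%R by near: n; exact: ev.
  have Fd (y : R) : (0 < y)%R -> is_derive y 1 (fun y => b^-1 * y `^ b)%R (y `^ (b - 1)) by move=> y0; exact: Fderiv.
  have Fc (y : R) : (0 < y)%R -> {for y, continuous (fun y => b^-1 * y `^ b)%R}.
    move=> y0; apply: differentiable_continuous; apply/derivable1_diffP.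
    by case: (Fd y y0).
  rewrite /Fs (@continuous_FTC2 _ _ (fun y => b^-1 * y `^ b)%R) //.
  - by rewrite -EFinB; congr EFin; rewrite -mulrBr mulrC.
  - apply: continuous_in_subspaceT => y; rewrite inE /= in_itv /= => /andP[ay _].
    exact: powR_cont (lt_le_trans cn ay).
  - split.
    + move=> y; rewrite in_itv /= => /andP[ay _].
      by case: (Fd y (lt_trans cn ay)).
    + exact/cvg_at_right_filter/Fc.
    + exact/cvg_at_left_filter/Fc/(lt_trans cn ct).
  - move=> y; rewrite in_itv /= => /andP[ay _].
    by rewrite derive1E; case: (Fd y (lt_trans cn ay)) => _ ->.
apply: cvg_trans (near_eq_cvg E) _.
apply: cvg_EFin; first exact: nearW.
have -> : (t `^ b / b = (t `^ b - 0) / b)%R by rewrite subr0.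
apply: cvgM; last exact: cvg_cst.
apply: cvgB; first exact: cvg_cst.
have := powR_cvg0 b0; move/cvg_at_rightP => /(_ harmonic); apply; split.
  exact: harmonic_gt0.
exact: cvg_harmonic.
Unshelve. all: by end_near.
Qed.

Lemma Hq_cont (q y : R) : 0 < y -> {for y, continuous (Hq q)}.
Proof.
move=> y0; apply: differentiable_continuous; apply/derivable1_diffP.
rewrite /Hq; apply: derivableD; apply: derivableM => //;
  by apply: derivable_powR; rewrite in_itv/= andbT.
Qed.

Lemma Hq_inv_spec (q z : R) : 0 < q < 1 -> 1 <= z ->
  1 <= Hq_inv q z /\ Hq q (Hq_inv q z) = z.
Proof.
move=> /andP[q0 q1] z1.
suff ex : exists w : R, 1 <= w /\ Hq q w = z by exact: (xgetPex 1 ex).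
have q1' : 0 < 1 - q by rewrite subr_gt0.
pose M := Num.max 1 ((z / (1 - q)) `^ q^-1).
have M1 : 1 <= M by rewrite le_max lexx.
have H1 : Hq q 1 = 1 by rewrite /Hq !powR1 !mulr1 subrK.
have HM : z <= Hq q M.
  rewrite /Hq.
  have : z <= (1 - q) * M `^ q.
    rewrite -ler_pdivrMl // mulrC.
    have -> : z / (1 - q) = ((z / (1 - q)) `^ q^-1) `^ q.
      rewrite -powRrM mulVf ?gt_eqF // powRr1 // divr_ge0 // ?ltW //.
      exact: (lt_le_trans ltr01 z1).
    apply: (@ge0_ler_powR R q (ltW q0)); rewrite ?nnegrE ?powR_ge0 //.
      exact: le_trans ler01 M1.
    by rewrite le_max lexx orbT.
  move=> h; apply: (le_trans h); rewrite lerDl mulr_ge0 ?powR_ge0 ?ltW //.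
have cH : {within `[1, M], continuous (Hq q)}.
  apply: continuous_in_subspaceT => y; rewrite inE /= in_itv /= => /andP[y1 _].
  exact: Hq_cont (lt_le_trans ltr01 y1).
have hv : Num.min (Hq q 1) (Hq q M) <= z <= Num.max (Hq q 1) (Hq q M).
  by rewrite ge_min le_max H1 z1 HM orbT.
have [c] := IVT M1 cH hv.
rewrite in_itv /= => /andP[c1 _] Hc.
by exists c.
Qed.
End Helpers.

Theorem lemma4p1 (R : realType) (q f h : R) :
  0 < q < 1 -> 0 < f -> 0 < h -> h <= f `^ q ->
  exists g : R -> R,
    (forall t, t \in `]0, 1] -> 0 < g t) /\
    (forall x y, x \in `]0, 1] -> y \in `]0, 1] -> x <= y -> g y <= g x) /\
    {within `]0, 1]%classic, continuous g} /\
    (\int[lebesgue_measure]_(u in `]0%R, 1%R]%classic) (g u)%:E = f%:E)%E /\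
    (\int[lebesgue_measure]_(u in `]0%R, 1%R]%classic) (g u `^ q)%:E = h%:E)%E /\
    (forall t, t \in `]0, 1] ->
       (\int[lebesgue_measure]_(u in `]0%R, t]%classic) (g u)%:E
          = (t * (omega_q q (f `^ q / h) `^ q^-1 * g t))%:E)%E).
Proof.
move=> qq f0 h0 hf; have /andP[q0 q1] := qq.
have z1 : 1 <= f `^ q / h by rewrite ler_pdivlMr // mul1r.
have [w1 Hw] := @Hq_inv_spec R q _ qq z1.
move: w1 Hw; rewrite /omega_q; set w := Hq_inv q (f `^ q / h) => w1 Hw.
have w0 : 0 < w := lt_le_trans ltr01 w1.
have -> : (w `^ q) `^ q^-1 = w by rewrite -powRrM mulfV ?gt_eqF // powRr1 // ltW.
have a0 : 0 < w^-1 by rewrite invr_gt0.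
have a1 : w^-1 <= 1 by rewrite invf_le1.
have A0 : 0 < f / w by rewrite divr_gt0.
exists (fun u => f / w * u `^ (w^-1 - 1)).
have intg (t : R) : 0 < t -> (\int[lebesgue_measure]_(u in `]0%R, t]%classic) ((f / w) * u `^ (w^-1 - 1))%:E
    = ((f / w) * (t `^ w^-1 / w^-1))%:E)%E.
  move=> t0.
  under eq_integral do rewrite EFinM.
  rewrite ge0_integralZl_EFin //=; last 3 first.
  - by move=> x _; rewrite lee_fin powR_ge0.
  - exact: mpow.
  - exact: ltW.
  by rewrite (@int_pow R _ _ a0 t0) -EFinM.
split.
  by move=> t; rewrite inE /= in_itv /= => /andP[t0 _]; rewrite mulr_gt0 // powR_gt0.
split.
  move=> x y; rewrite !inE /= !in_itv /= => /andP[x0 _] /andP[y0 _] xy.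
  rewrite ler_pM2l //.
  have -> : w^-1 - 1 = - (1 - w^-1) by rewrite opprB.
  rewrite !powRN lef_pV2 ?posrE ?powR_gt0 //.
  have r0 : 0 <= 1 - w^-1 by rewrite subr_ge0.
  have xn : x \is Num.nneg by rewrite nnegrE ltW.
  have yn : y \is Num.nneg by rewrite nnegrE ltW.
  exact: (ge0_ler_powR r0 xn yn xy).
split.
  apply: continuous_in_subspaceT => y; rewrite inE /= in_itv /= => /andP[y0 _].
  apply: differentiable_continuous; apply/derivable1_diffP.
  by apply: derivableM => //; apply: derivable_powR; rewrite in_itv/= andbT.
split.
  rewrite intg // powR1 invrK; congr EFin; field.
  by rewrite gt_eqF.
split.
  have e (u : R) : (f / w * u `^ (w^-1 - 1)) `^ q
      = (f / w) `^ q * u `^ ((w^-1 - 1) * q + 1 - 1).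
    by rewrite powRM ?powR_ge0 ?ltW // -powRrM addrK.
  under eq_integral do rewrite e EFinM.
  have b0 : 0 < (w^-1 - 1) * q + 1.
    have -> : (w^-1 - 1) * q + 1 = w^-1 * q + (1 - q) by ring.
    by rewrite addr_gt0 ?mulr_gt0 // subr_gt0.
  rewrite ge0_integralZl_EFin //=; last 3 first.
  - by move=> x _; rewrite lee_fin powR_ge0.
  - exact: mpow.
  - exact: powR_ge0.
  rewrite (@int_pow R _ _ b0 ltr01) powR1 -EFinM; congr EFin.
  rewrite powRM ?ltW ?invr_gt0 //.
  rewrite -(powR_inv1 (ltW w0)) -powRrM mulN1r powRN.
  move: Hw; rewrite /Hq powRB; last by rewrite (gt_eqF w0) implybT.
  rewrite powRr1 ?ltW // => Hw.
  have W0 : 0 < w `^ q by rewrite powR_gt0.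
  have HF : f `^ q = h * ((1 - q) * w `^ q + q * (w `^ q / w)).
    by rewrite Hw mulrC divfK ?gt_eqF.
  rewrite HF (powR_inv1 (ltW w0)); field.
  rewrite (gt_eqF w0) (gt_eqF W0) /= andbT.
  have -> : (1 + -1 * w) * q + w = w * ((w^-1 - 1) * q + 1).
    by field; rewrite gt_eqF.
  by rewrite gt_eqF // mulr_gt0.
move=> t; rewrite inE /= in_itv /= => /andP[t0 _]; rewrite intg //; congr EFin.
rewrite -(mulr_powRB1 (ltW t0) a0) invrK; ring.
Qed.
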